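(* Let $\Gamma$ be a connected simple graph and $N>2$. Then $\mathrm{Conf}_{\Gamma}(\mathbb{R}^N)$ is $(N-2)$-connected.
   Context: For a simple graph $\Gamma$ with vertex set $\{1,\dots,m\}$, $\mathrm{Conf}_{\Gamma}(X)=\{(x_1,\dots,x_m)\in X^m : x_i\neq x_j \text{ whenever } \{i,j\}\text{ is an edge}\}$. *)

(* Defs.v *)
From HB Require Import structures.
From mathcomp Require Import all_boot all_order all_algebra.
From mathcomp Require Import all_classical all_reals all_analysis.
Set Implicit Arguments. Unset Strict Implicit. Unset Printing Implicit Defensive.
Import Order.TTheory GRing.Theory Num.Theory.
Import numFieldNormedType.Exports.
Local Open Scope classical_set_scope.
Local Open Scope ring_scope.

Definition simple_graph (m : nat) (e : rel 'I_m) : Prop :=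
  symmetric e /\ irreflexive e.

Definition graph_connected (m : nat) (e : rel 'I_m) : Prop :=
  forall i j : 'I_m, connect e i j.

(* Conf_Gamma(R^N): configurations (x_1,...,x_m) in (R^N)^m, stored as the
   rows of an m x N real matrix, with x_i <> x_j whenever {i,j} is an edge.
   (R^N)^m carries the product topology = topology of 'M[R]_(m,N). *)
Definition Conf (R : realType) (m N : nat) (e : rel 'I_m) : set 'M[R]_(m, N) :=
  [set x | forall i j : 'I_m, e i j -> row i x <> row j x].

Definition sphere (R : realType) (k : nat) : set 'rV[R]_k.+1 :=
  [set s | \sum_(i < k.+1) s ord0 i ^+ 2 = 1].

Arguments sphere R k : clear implicits.

Definition sphere_pt (R : realType) (k : nat) : 'rV[R]_k.+1 :=
  \row_(i < k.+1) (i == ord0)%:R.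

Arguments sphere_pt R k : clear implicits.

Definition unit_interval (R : realType) : set R := [set t | 0 <= t <= 1].

Arguments unit_interval R : clear implicits.

(* pi_k(X, x0) is trivial: every based continuous map (S^k, s0) -> (X, x0)
   is homotopic relative to the base point to the constant map at x0. *)
Definition pi_trivial (R : realType) (T : topologicalType) (X : set T)
    (k : nat) (x0 : T) : Prop :=
  forall f : 'rV[R]_k.+1 -> T,
    {within sphere R k, continuous f} ->
    f @` sphere R k `<=` X ->
    f (sphere_pt R k) = x0 ->
    exists H : R * 'rV[R]_k.+1 -> T,
      [/\ {within unit_interval R `*` sphere R k, continuous H},
          H @` (unit_interval R `*` sphere R k) `<=` X,
          (forall s, sphere R k s -> H (0, s) = f s),
          (forall s, sphere R k s -> H (1, s) = x0) &
          (forall t, unit_interval R t -> H (t, sphere_pt R k) = x0)].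

Arguments pi_trivial R [T] X k x0.

(* X is n-connected: X is nonempty and pi_k(X, x0) = 0 for all 0 <= k <= n
   and all base points x0 in X (k = 0: path-connectedness). *)
Definition n_connected (R : realType) (T : topologicalType) (n : nat)
    (X : set T) : Prop :=
  X !=set0 /\
  forall k : nat, (k <= n)%N -> forall x0 : T, X x0 -> pi_trivial R X k x0.

Arguments n_connected R [T] n X.
Arguments Conf R [m] N e.

(* Main.v *)
Require Import Defs.
From HB Require Import structures.
From mathcomp Require Import all_boot all_order all_algebra.
From mathcomp Require Import all_classical all_reals all_analysis.
Import numFieldNormedType.Exports.
From mathcomp Require Import ring lra zify.

Module Aux.
Set Implicit Arguments. Unset Strict Implicit. Unset Printing Implicit Defensive.
Import Order.TTheory GRing.Theory Num.Theory.
Local Open Scope classical_set_scope.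
Local Open Scope ring_scope.

Section Basics.
Variable R : realType.

Lemma mx_entry_le m n (x : 'M[R]_(m,n)) i j : `|x i j| <= `|x|.
Proof.
rewrite [leRHS]/Num.norm /= mx_normrE.
rewrite (bigD1 (i, j)) //=; by rewrite le_max lexx.
Qed.

Lemma mx_norm_le m n (x : 'M[R]_(m,n)) c : 0 <= c ->
  (forall i j, `|x i j| <= c) -> `|x| <= c.
Proof.
move=> c0 H; rewrite [leLHS]/Num.norm /= mx_normrE.
by apply: bigmax_le => // -[i j] _; apply: H.
Qed.

Lemma row_norm_le m n (x : 'M[R]_(m,n)) i : `|row i x| <= `|x|.
Proof.
apply: mx_norm_le => // a b; rewrite mxE; exact: mx_entry_le.
Qed.

Lemma within_eps (T : pseudoMetricType R) (W : normedModType R) (A : set T) (F : T -> W) :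
  (forall x, A x -> forall eps, 0 < eps -> exists2 d, 0 < d &
     forall y, A y -> ball x d y -> `|F x - F y| < eps) ->
  {within A, continuous F}.
Proof.
move=> H; apply/subspace_continuousP => x Ax.
apply/cvgrPdist_lt => eps eps0.
have [d d0 Hd] := H x Ax eps eps0.
rewrite /within; apply: filterS (nbhsx_ballx x _ d0) => y bxy Ay; exact: Hd.
Qed.


Lemma sum_continuous (T : topologicalType) (I : Type) (r : seq I)
  (F : I -> T -> R^o) :
  (forall i, continuous (F i)) -> continuous (fun x => \sum_(i <- r) F i x).
Proof.
move=> H x; elim: r => [|a r IH].
  under eq_fun do rewrite big_nil; exact: cst_continuous.
under eq_fun do rewrite big_cons.
exact: (continuousD (H a x) IH).
Qed.

Variable k : nat.

Lemma sphere_entry (s : 'rV[R]_k.+1) l : sphere R k s -> `|s ord0 l| <= 1.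
Proof.
rewrite /sphere /= => Hs.
have : s ord0 l ^+ 2 <= 1.
  rewrite -Hs (bigD1 l) //= lerDl; apply: sumr_ge0 => i _; exact: sqr_ge0.
by rewrite -real_normK ?num_real // expr_le1.
Qed.

Lemma sphere_norm (s : 'rV[R]_k.+1) : sphere R k s -> `|s| <= 1.
Proof.
move=> Ss; apply: mx_norm_le => // i j; rewrite (ord1 i); exact: sphere_entry.
Qed.

Lemma sphere_pt_in : sphere R k (sphere_pt R k).
Proof.
rewrite /sphere /= (bigD1 ord0) //= big1 => [|i /negPf ni0].
  by rewrite mxE eqxx expr1n addr0.
by rewrite mxE ni0 expr0n.
Qed.

Lemma sphere_closed : closed (sphere R k).
Proof.
have -> : sphere R k = (fun s : 'rV[R]_k.+1 => \sum_(i < k.+1) s ord0 i ^+ 2) @^-1` [set 1].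
  by [].
have C1 : closed [set x : R | x = 1] by apply: closed_eq.
have ct : continuous (fun s : 'rV[R]_k.+1 => \sum_(i < k.+1) s ord0 i ^+ 2 : R^o).
  apply: sum_continuous => i x.
  have := continuousM (@coord_continuous R 1 k.+1 ord0 i x) (@coord_continuous R 1 k.+1 ord0 i x).
  have -> // : (fun s : 'rV[R]_k.+1 => s ord0 i ^+ 2 : R^o) = (fun s => s ord0 i) \* (fun s => s ord0 i).
  by apply/funext => y; rewrite /= expr2.
by move/continuous_closedP : ct => /(_ _ C1).
Qed.

Lemma sphere_compact : compact (sphere R k).
Proof.
apply: bounded_closed_compact; last exact: sphere_closed.
have Hb : [bounded x | x in sphere R k]; last exact: Hb.
rewrite /bounded_near; near=> M => s Ss /=.
apply: le_trans (sphere_norm Ss) _; near: M; exact: nbhs_pinfty_ge.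
Unshelve. all: by end_near.
Qed.

End Basics.


Section Unif.
Variable R : realType.

Lemma within_eps_inv (V : normedModType R) (W : normedModType R) (A : set V) (F : V -> W) :
  {within A, continuous F} ->
  forall x, A x -> forall eps, 0 < eps -> exists2 d, 0 < d &
     forall y, A y -> `|x - y| < d -> `|F x - F y| < eps.
Proof.
move=> /subspace_continuousP H x Ax eps eps0.
have := H x Ax; move/cvgrPdist_lt => /(_ eps eps0).
rewrite /within => /nbhs_ballP [d d0 Hd].
exists d => // y Ay xy; apply: Hd => //.
by rewrite -ball_normE /ball_ /=.
Qed.

Lemma hp (x : R) : 0 < x -> 0 < x / 2.
Proof. by move=> x0; rewrite divr_gt0. Qed.

Variable k : nat.

Lemma unif_cont_sphere (W : normedModType R) (f : 'rV[R]_k.+1 -> W) :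
  {within sphere R k, continuous f} -> forall eps, 0 < eps ->
  exists2 r, 0 < r & forall s y, sphere R k s -> sphere R k y ->
     `|s - y| < r -> `|f s - f y| < eps.
Proof.
move=> fc eps eps0.
have /compact_near_coveringP NC := @sphere_compact R k.
have H : \forall r \near (0:R)^'+, sphere R k `<=` (fun s => sphere R k s -> forall y, sphere R k y ->
     `|s - y| < r -> `|f s - f y| < eps).
  apply: NC => x Sx.
  have [eta eta0 He] := within_eps_inv fc Sx (hp eps0).
  exists (ball x (eta/2), [set r | 0 < r < eta/2]).
    split; first exact: nbhsx_ballx (hp eta0).
    rewrite /=. near=> r; apply/andP; split.
    + near: r; exact: nbhs_right_gt.
    + near: r; apply: nbhs_right_lt; exact: hp.
  move=> [x' r] [/= bx /andP [r0 rlt]] Sx' y Sy x'y.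
  rewrite -ball_normE /ball_ /= in bx.
  have xy : `|x - y| < eta.
    rewrite (le_lt_trans (ler_distD x' _ _)) //.
    by rewrite (splitr eta) ltrD // (lt_trans x'y).
  rewrite (le_lt_trans (ler_distD (f x) _ _)) //.
  rewrite (splitr eps) ltrD //; last exact: He.
  rewrite distrC; apply: He => //.
  by apply: lt_trans bx _; rewrite ltr_pdivrMr // ltr_pMr // ltr1n.
  have [r [/= r0 Hr]] := filter_ex (filterI (@nbhs_right_gt R 0) H).
  exists r => // s y Ss Sy; exact: Hr.
Unshelve. all: by end_near.
Qed.

End Unif.


Section InfConv.
Variable R : realType.
Variables (V : normedModType R) (S : set V) (F : V -> R) (L B : R).
Hypothesis S0 : S !=set0.
Hypothesis FB : forall y, S y -> - B <= F y.
Hypothesis L0 : 0 <= L.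

Definition icset x := [set u | exists2 y, S y & u = F y + L * `|x - y|].
Definition ic x := inf (icset x).

Lemma icset_lb x : has_lbound (icset x).
Proof.
exists (- B) => u [y Sy ->].
by rewrite -[X in X <= _]addr0 lerD // ?FB // mulr_ge0.
Qed.

Lemma icset_ne x : icset x !=set0.
Proof. by case: S0 => y Sy; exists (F y + L * `|x - y|); exists y. Qed.

Lemma ic_le x y : S y -> ic x <= F y + L * `|x - y|.
Proof. by move=> Sy; apply: (ge_inf (icset_lb x)); exists y. Qed.

Lemma ic_ge x c : (forall y, S y -> c <= F y + L * `|x - y|) -> c <= ic x.
Proof.
move=> H; apply: lb_le_inf; first exact: icset_ne.
by move=> u [y Sy ->]; apply: H.
Qed.

Lemma ic_lip x x' : ic x <= ic x' + L * `|x - x'|.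
Proof.
rewrite -lerBlDr; apply: ic_ge => y Sy.
rewrite lerBlDr (le_trans (ic_le x Sy)) //.
rewrite -addrA lerD2l -mulrDr ler_wpM2l //.
by rewrite (le_trans (ler_distD x' x y)) // distrC addrC.
Qed.

Lemma ic_lip_abs x x' : `|ic x - ic x'| <= L * `|x - x'|.
Proof.
have h1 := ic_lip x x'; have h2 := ic_lip x' x; rewrite distrC in h2.
rewrite ler_norml; apply/andP; split; lra.
Qed.

End InfConv.


Section Approx.
Variable R : realType.
Variables (k m N : nat).

Lemma eqA (a b c d : R) : a - c + d - (b - c + d) = a - b.
Proof. by ring. Qed.

Lemma eqB (a c d e : R) : a - c + d - e = (a - e) - (c - d).
Proof. by ring. Qed.

Lemma lip_approx (f : 'rV[R]_k.+1 -> 'M[R]_(m,N)) :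
  {within sphere R k, continuous f} -> forall eta, 0 < eta ->
  exists g : 'rV[R]_k.+1 -> 'M[R]_(m,N), exists L : R,
   [/\ 0 <= L, (forall x y, `|g x - g y| <= L * `|x - y|),
       (forall s, sphere R k s -> `|g s - f s| <= eta) &
       g (sphere_pt R k) = f (sphere_pt R k)].
Proof.
move=> fc eta eta0.
set S := sphere R k; set p := sphere_pt R k.
have Sp : S p := sphere_pt_in R k.
have S0 : S !=set0 by exists p.
have nfc : {within S, continuous (Num.norm \o f)}.
  apply: within_continuous_comp => // y _; exact: norm_continuous.
have [c Sc Hc] := EVT_max_rV S0 (@sphere_compact R k) nfc.
set B := `|f c|.
have HB : forall y, S y -> `|f y| <= B.
  by move=> y Sy; apply: (Hc y); rewrite inE.
have B0 : 0 <= B by exact: normr_ge0.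
have [r r0 Hr] := unif_cont_sphere fc (hp eta0).
set L := 2 * B / r.
have L0 : 0 <= L by rewrite /L divr_ge0 // ?mulr_ge0 // ltW.
have Lr : L * r = 2 * B by rewrite /L divfK // gt_eqF.
pose gh a b x := ic S (fun y => f y a b) L x.
have FB : forall a b y, S y -> - B <= f y a b.
  move=> a b y Sy.
  have : `|f y a b| <= B by apply: le_trans (HB y Sy); exact: mx_entry_le.
  by rewrite ler_norml => /andP [].
have ghS : forall a b s, S s -> `|gh a b s - f s a b| <= eta / 2.
  move=> a b s Ss.
  have low : f s a b - eta / 2 <= gh a b s.
    apply: (ic_ge S0) => y Sy.
    have [sy|sy] := ltP (`|s - y|) r.
      have := Hr s y Ss Sy sy.
      move=> H; have H2 : `|f s a b - f y a b| < eta / 2.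
        by apply: le_lt_trans H; have := mx_entry_le (f s - f y) a b; rewrite !mxE.
      have Ln : 0 <= L * `|s - y| by rewrite mulr_ge0.
      move: H2; rewrite ltr_norml => /andP [h1 h2]; lra.
    have h1 : L * r <= L * `|s - y| by rewrite ler_wpM2l.
    have h2 : `|f s a b| <= B by apply: le_trans (HB s Ss); exact: mx_entry_le.
    have h3 : `|f y a b| <= B by apply: le_trans (HB y Sy); exact: mx_entry_le.
    move: h2 h3; rewrite !ler_norml => /andP [h2 h2'] /andP [h3 h3']; lra.
  have := @ic_le R _ S (fun y => f y a b) L B (FB a b) L0 s s Ss.
  rewrite subrr normr0 mulr0 addr0 => h; rewrite ler_norml; apply/andP; split; rewrite /gh in low *; lra.
pose g0 x := \matrix_(a < m, b < N) gh a b x.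
exists (fun x => g0 x - g0 p + f p), L; split => //.
- move=> x y; apply: mx_norm_le => [|a b]; first by rewrite mulr_ge0.
  rewrite !mxE.
  rewrite eqA.
  exact: (@ic_lip_abs R _ S (fun y => f y a b) L B S0 (FB a b) L0).
- move=> s Ss; apply: mx_norm_le => [|a b]; first exact: ltW.
  rewrite !mxE.
  rewrite eqB.
  apply: le_trans (ler_normB _ _) _.
  rewrite (splitr eta) lerD //; exact: ghS.
- by rewrite subrr add0r.
Qed.

End Approx.


Lemma leq_expn_l (a b e : nat) : (a <= b)%N -> (a ^ e <= b ^ e)%N.
Proof. by move=> ab; elim: e => // e IH; rewrite !expnS leq_mul. Qed.

Lemma avoid_arith (r c d n : nat) : (d < n)%N ->
  (r * (c * (r * c.+1 ^ d).+1).+1 ^ d < (r * c.+1 ^ d).+1 ^ n)%N.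
Proof.
move=> dn; set Kg := (r * c.+1 ^ d).+1.
have Kg0 : (0 < Kg)%N by [].
have h1 : ((c * Kg).+1 <= c.+1 * Kg)%N by rewrite mulSn addnC -addn1 leq_add2l.
have h2 : ((c * Kg).+1 ^ d <= c.+1 ^ d * Kg ^ d)%N.
  by rewrite -expnMn; apply: leq_expn_l.
apply: (@leq_ltn_trans (r * (c.+1 ^ d * Kg ^ d))); first by rewrite leq_mul2l h2 orbT.
rewrite mulnA; apply: (@leq_trans (Kg ^ d.+1)); last by rewrite leq_pexp2l.
by rewrite expnS ltn_pmul2r ?expn_gt0 ?Kg0.
Qed.

Lemma natr_dist_lt1 (R : realType) (a b : nat) : `|a%:R - b%:R : R| < 1 -> a = b.
Proof.
move=> H; apply/eqP; rewrite eqn_leq; apply/andP; split; rewrite leqNgt; apply/negP => ab.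
  have ab' := ltnW ab.
  by move: H; rewrite -natrB // ger0_norm // ltNge ler1n subn_gt0 ab.
have ab' := ltnW ab.
by move: H; rewrite distrC -natrB // ger0_norm // ltNge ler1n subn_gt0 ab.
Qed.

Section Avoid.
Variable R : realType.
Variables (d n : nat) (I : finType) (h : I -> 'rV[R]_d -> 'rV[R]_n) (K rho : R).
Hypotheses (dn : (d < n)%N) (rho0 : 0 < rho) (K0 : 0 <= K).
Hypothesis hL : forall a x y, `|x| <= 1 -> `|y| <= 1 ->
  `|h a x - h a y| <= K * `|x - y|.

Let c := (Num.Def.trunc (8 * K / rho)).+1.
Let Kg := (#|I| * c.+1 ^ d).+1.
Let nd := (c * Kg)%N.
Let sig := rho / Kg%:R.

Let node (u : {ffun 'I_d -> 'I_nd.+1}) : 'rV[R]_d :=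
  \row_l (-1 + 2 * (u l : nat)%:R / nd%:R).
Let wz (z : {ffun 'I_n -> 'I_Kg}) : 'rV[R]_n := \row_l (sig * (z l : nat)%:R).

Let nd0 : (0 < nd)%N.
Proof. by rewrite /nd muln_gt0. Qed.

Let ndR0 : 0 < nd%:R :> R.
Proof. by rewrite ltr0n nd0. Qed.

Let sig0 : 0 < sig.
Proof. by rewrite /sig divr_gt0 // ltr0n. Qed.

Let cbound : 4 * K < c%:R * rho.
Proof.
have := truncnS_gt (8 * K / rho); rewrite -/c => H.
rewrite ltr_pdivrMr // in H; have K1 := K0; lra.
Qed.

Let node_norm u : `|node u| <= 1.
Proof.
apply: mx_norm_le => // i l; rewrite mxE.
have hu : ((u l : nat)%:R <= nd%:R :> R) by rewrite ler_nat -ltnS ltn_ord.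
have e1 : 0 <= 2 * (u l : nat)%:R / nd%:R :> R by rewrite divr_ge0 ?mulr_ge0.
have e2 : 2 * (u l : nat)%:R / nd%:R <= 2 :> R.
  by rewrite ler_pdivrMr // ler_pM2l.
rewrite ler_norml; apply/andP; split; lra.
Qed.

Let approx x : `|x| <= 1 -> exists u, `|x - node u| <= 2 / nd%:R.
Proof.
move=> x1.
pose t l := (x ord0 l + 1) * nd%:R / 2.
have t0 : forall l, 0 <= t l.
  move=> l; rewrite /t divr_ge0 // mulr_ge0 //.
  have := mx_entry_le x ord0 l; rewrite -lerBlDr => h1.
  have := le_trans h1 x1. rewrite ler_norml => /andP [h2 _].
  by move: (le_trans (mx_entry_le x ord0 l) x1); rewrite ler_norml => /andP [h3 _]; lra.
have tnd : forall l, (Num.Def.trunc (t l) < nd.+1)%N.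
  move=> l; rewrite ltnS truncn_le_nat.
  have : t l <= nd%:R.
    rewrite /t ler_pdivrMr // mulrC ler_pM2l //.
    by move: (le_trans (mx_entry_le x ord0 l) x1); rewrite ler_norml => /andP [_ h3]; lra.
  by move=> hh; apply: le_lt_trans hh _; rewrite ltr_nat.
exists [ffun l => Ordinal (tnd l)].
apply: mx_norm_le; first by rewrite divr_ge0.
move=> i l; rewrite (ord1 i) !mxE ffunE /=.
have [T1 T2] : (Num.Def.trunc (t l))%:R <= t l /\ t l < (Num.Def.trunc (t l)).+1%:R.
  by have /andP [] := truncn_itv (t0 l).
set T := (Num.Def.trunc (t l))%:R in T1 T2 *.
rewrite -natr1 -/T in T2.
have E : x ord0 l - (-1 + 2 * T / nd%:R) = 2 * (t l - T) / nd%:R.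
  by rewrite /t; field; rewrite gt_eqF.
rewrite E ger0_norm; last by rewrite divr_ge0 // mulr_ge0 // subr_ge0.
rewrite ler_pM2r ?invr_gt0 //; lra.
Qed.

Let cov z := [exists a : I, exists u : {ffun 'I_d -> 'I_nd.+1},
  `|h a (node u) - wz z| < sig / 2].

Let small_step : K * (2 / nd%:R) < sig / 2.
Proof.
have c0 : (0 < c)%N by [].
have cR : c%:R != 0 :> R by rewrite pnatr_eq0 -lt0n.
have KR : Kg%:R != 0 :> R by rewrite pnatr_eq0.
have e : K * (2 / nd%:R) = (4 * K) / c%:R * (Kg%:R^-1 / 2).
  by rewrite /nd natrM; field; rewrite cR KR.
have e' : sig / 2 = rho * (Kg%:R^-1 / 2) by rewrite /sig; field; rewrite KR.
rewrite e e' ltr_pM2r; last by rewrite divr_gt0 // invr_gt0 ltr0n.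
by rewrite ltr_pdivrMr ?ltr0n // [X in _ < X]mulrC cbound.
Qed.

Let uncov_avoid z : ~~ cov z -> forall a x, `|x| <= 1 -> h a x != wz z.
Proof.
move=> nc a x x1; apply/eqP => hx.
have [u xu] := approx x1.
move/negP: nc; apply; apply/existsP; exists a; apply/existsP; exists u.
rewrite -hx.
apply: le_lt_trans (hL a (node_norm u) x1) _.
apply: le_lt_trans small_step; rewrite ler_wpM2l // distrC //.
Qed.

Let wz_inj z z' : `|wz z - wz z'| < sig -> z = z'.
Proof.
move=> H; apply/ffunP => l; apply: val_inj => /=.
apply: (@natr_dist_lt1 R).
have := le_lt_trans (mx_entry_le (wz z - wz z') ord0 l) H.
by rewrite !mxE -mulrBr normrM gtr0_norm // -[X in _ < X]mulr1 ltr_pM2l.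
Qed.

Let wz_norm z : `|wz z| < rho.
Proof.
set M0 := (#|I| * c.+1 ^ d)%N.
have rhoE : rho = sig * M0.+1%:R by rewrite /sig /Kg divfK // pnatr_eq0.
apply: (@le_lt_trans _ _ (sig * M0%:R)); last first.
  by rewrite rhoE ltr_pM2l // ltr_nat.
apply: mx_norm_le; first by rewrite mulr_ge0 // ltW.
have sg := ltW sig0.
have r0 := ltW rho0.
move=> i l; rewrite /wz mxE ger0_norm ?mulr_ge0 // ler_pM2l ?sig0 // ler_nat.
by rewrite -ltnS; exact: ltn_ord.
Qed.

Lemma avoid_main : exists w, `|w| < rho /\ forall a x, `|x| <= 1 -> h a x != w.
Proof.
suff [z nz] : exists z, ~~ cov z.
  by exists (wz z); split; [exact: wz_norm | exact: uncov_avoid].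
case: (boolP [forall z, cov z]) => [allc|]; last first.
  by rewrite negb_forall => /existsP.
exfalso.
pose z0 : {ffun 'I_n -> 'I_Kg} := [ffun _ => ord0].
have /existsP [a0 /existsP [u0 _]] := forallP allc z0.
pose phi z := odflt (a0, u0) [pick au : I * {ffun 'I_d -> 'I_nd.+1} |
   `|h au.1 (node au.2) - wz z| < sig / 2].
have phiP z : `|h (phi z).1 (node (phi z).2) - wz z| < sig / 2.
  rewrite /phi; case: pickP => [au Hau //|none].
  have /existsP [a /existsP [u Hu]] := forallP allc z.
  by have := none (a, u); rewrite /= Hu.
have inj : injective phi.
  move=> z z' e; apply: wz_inj.
  have h1 := phiP z; have h2 := phiP z'; rewrite -e in h2.
  rewrite distrC in h1.
  apply: le_lt_trans (ler_distD (h (phi z).1 (node (phi z).2)) _ _) _.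
  by rewrite (splitr sig) ltrD.
have := leq_card phi inj; rewrite card_ffun card_prod card_ffun !card_ord.
by rewrite leqNgt avoid_arith.
Qed.

End Avoid.


Section Helpers.
Variable R : realType.

Lemma min_lip (a b c d D : R) : `|a - c| <= D -> `|b - d| <= D ->
  `|Order.min a b - Order.min c d| <= D.
Proof.
rewrite !ler_norml => /andP [h1 h2] /andP [h3 h4].
case: (lerP a b) => ab; case: (lerP c d) => cd;
  rewrite ?(min_l ab) ?(min_r (ltW ab)) ?(min_l cd) ?(min_r (ltW cd));
  apply/andP; split; lra.
Qed.

Lemma max_lip (a b c d D : R) : `|a - c| <= D -> `|b - d| <= D ->
  `|Order.max a b - Order.max c d| <= D.
Proof.
rewrite !ler_norml => /andP [h1 h2] /andP [h3 h4].
case: (lerP a b) => ab; case: (lerP c d) => cd;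
  rewrite ?(max_r ab) ?(max_l (ltW ab)) ?(max_r cd) ?(max_l (ltW cd));
  apply/andP; split; lra.
Qed.

Lemma clamp_lip (a b : R) :
  `|Order.min 1 (Order.max 0 a) - Order.min 1 (Order.max 0 b)| <= `|a - b|.
Proof.
apply: min_lip; first by rewrite subrr normr0.
by apply: max_lip => //; rewrite subrr normr0.
Qed.

Lemma bigmin_lip (I : finType) (P : pred I) (F G : I -> R) (x0 D : R) :
  0 <= D -> (forall i, P i -> `|F i - G i| <= D) ->
  `|\big[Order.min/x0]_(i | P i) F i - \big[Order.min/x0]_(i | P i) G i| <= D.
Proof.
move=> D0 H; elim/big_ind2: _ => //; first by rewrite subrr normr0.
by move=> a b c d h1 h2; exact: min_lip.
Qed.

Lemma rowD_bound m N (A B : 'M[R]_(m, N)) i j :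
  `| `|row i A - row j A| - `|row i B - row j B| | <= 2 * `|A - B|.
Proof.
apply: le_trans (ler_dist_dist _ _) _.
have -> : row i A - row j A - (row i B - row j B) = row i (A - B) - row j (A - B).
  by apply/rowP => l; rewrite !mxE; ring.
apply: le_trans (ler_normB _ _) _.
by rewrite mulr2n mulrDl mul1r lerD // row_norm_le.
Qed.

Lemma coef_le1 (i j : nat) : `|((i%:R - j%:R : R)^-1)| <= 1.
Proof.
case: (eqVneq i j) => [->|ij]; first by rewrite subrr invr0 normr0.
rewrite normrV ?unitfE; last by rewrite subr_eq0 eqr_nat.
rewrite invf_le1; last by rewrite normr_gt0 subr_eq0 eqr_nat.
by rewrite leNgt; apply/negP => /natr_dist_lt1 /eqP; rewrite (negPf ij).
Qed.

End Helpers.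


Section Main.
Variable R : realType.
Variables (m N k : nat) (e : rel 'I_m).
Hypothesis eirr : irreflexive e.
Hypothesis kN : (k.+1 < N)%N.
Variable f : 'rV[R]_k.+1 -> 'M[R]_(m,N).
Hypothesis fc : {within sphere R k, continuous f}.
Hypothesis fS : f @` sphere R k `<=` Conf R N e.

Lemma main_homotopy : exists H : R * 'rV[R]_k.+1 -> 'M[R]_(m,N),
  [/\ {within unit_interval R `*` sphere R k, continuous H},
      H @` (unit_interval R `*` sphere R k) `<=` Conf R N e,
      (forall s, sphere R k s -> H (0, s) = f s),
      (forall s, sphere R k s -> H (1, s) = f (sphere_pt R k)) &
      (forall t, unit_interval R t -> H (t, sphere_pt R k) = f (sphere_pt R k))].
Proof.
set S := sphere R k; set p := sphere_pt R k.
have Sp : S p := sphere_pt_in R k.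
have S0 : S !=set0 by exists p.
have fconf : forall s i j, S s -> e i j -> row i (f s) != row j (f s).
  move=> s i j Ss eij; apply/eqP.
  by have := fS (ex_intro2 _ _ s Ss erefl); apply.
pose phi s : R := \big[Order.min/1]_(ij : 'I_m * 'I_m | e ij.1 ij.2)
   `|row ij.1 (f s) - row ij.2 (f s)|.
have phic : {within S, continuous (phi : 'rV[R]_k.+1 -> R^o)}.
  apply: within_eps => x Sx eps eps0.
  have [dd dd0 Hd] := within_eps_inv fc Sx (hp eps0).
  exists dd => // y Sy bxy.
  rewrite -ball_normE /ball_ /= in bxy.
  have Hf := Hd y Sy bxy.
  have hb := @bigmin_lip R _ (fun ij => e ij.1 ij.2)
    (fun ij => `|row ij.1 (f x) - row ij.2 (f x)|)
    (fun ij => `|row ij.1 (f y) - row ij.2 (f y)|) 1 (2 * `|f x - f y|)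
    (mulr_ge0 (ler0n _ 2) (normr_ge0 _)) (fun ij _ => rowD_bound _ _ _ _).
  rewrite /phi; apply: le_lt_trans hb _; lra.
have [c Sc Hc] := EVT_min_rV S0 (@sphere_compact R k) phic.
have phic0 : 0 < phi c.
  apply/bigmin_gtP; split => // ij eij.
  by rewrite normr_gt0 subr_eq0 fconf //; rewrite inE in Sc.
set eps := phi c / 4.
have eps0 : 0 < eps by rewrite divr_gt0.
have fsep : forall s i j, S s -> e i j -> 4 * eps <= `|row i (f s) - row j (f s)|.
  move=> s i j Ss eij.
  have h1 : phi c <= phi s by apply: Hc; rewrite inE.
  have h2 : phi s <= `|row i (f s) - row j (f s)|.
    by apply: (@bigmin_le_cond _ _ _ _ (i, j) (fun ij => e ij.1 ij.2)).
  rewrite /eps; lra.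
have [g [L [L0 gL gf gp]]] := lip_approx fc eps0.
have gsep : forall s i j, S s -> e i j -> 2 * eps <= `|row i (g s) - row j (g s)|.
  move=> s i j Ss eij.
  have h1 := fsep s i j Ss eij.
  have h2 := rowD_bound (f s) (g s) i j.
  have h3 := gf s Ss; rewrite distrC in h3.
  move: h2; rewrite ler_norml => /andP [h2 h2']; lra.
pose hh (ij : 'I_m * 'I_m) (x : 'rV[R]_k.+1) : 'rV[R]_N :=
  - (((ij.1 : nat)%:R - (ij.2 : nat)%:R)^-1) *: (row ij.1 (g x) - row ij.2 (g x)).
have hhL : forall a x y, `|x| <= 1 -> `|y| <= 1 ->
    `|hh a x - hh a y| <= (2 * L) * `|x - y|.
  move=> [i j] x y _ _; rewrite /hh /= -scalerBr normrZ normrN.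
  apply: le_trans (ler_pM _ _ (coef_le1 R i j) (lexx _)) _ => //.
  rewrite mul1r.
  have -> : row i (g x) - row j (g x) - (row i (g y) - row j (g y))
      = row i (g x - g y) - row j (g x - g y).
    by apply/rowP => l; rewrite !mxE; ring.
  apply: le_trans (ler_normB _ _) _.
  rewrite -mulrA mulr2n mulrDl mul1r.
  by rewrite lerD // (le_trans (row_norm_le _ _)) // gL.
have m10 : 0 < m%:R + 1 :> R by rewrite ltr_wpDl.
have [w [wn wav]] := avoid_main kN (divr_gt0 eps0 m10) (mulr_ge0 (ler0n _ 2) L0) hhL.
pose cmat : 'M[R]_(m,N) := \matrix_(i, l) ((i : nat)%:R * w ord0 l).
pose mu x : R := \big[Order.min/(2 * eps)]_(ij : 'I_m * 'I_m | e ij.1 ij.2)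
   `|row ij.1 (g x) - row ij.2 (g x)|.
pose rho x : R := Order.min 1 (Order.max 0 ((2 * eps - mu x) / eps)).
pose G x := g x + rho x *: cmat.
have muS : forall s, S s -> mu s = 2 * eps.
  move=> s Ss; apply/eqP; rewrite eq_le; apply/andP; split; first exact: bigmin_le_id.
  by apply: le_bigmin => // ij eij; exact: gsep.
have rhoS : forall s, S s -> rho s = 0.
  move=> s Ss; rewrite /rho muS // subrr mul0r.
  by rewrite maxxx min_r ?ler01.
have GS : forall s, S s -> G s = g s by move=> s Ss; rewrite /G rhoS // scale0r addr0.
have rho0 : forall x, 0 <= rho x.
  by move=> x; rewrite /rho le_min ler01 /= le_max lexx.
have rho1 : forall x, rho x <= 1.
  by move=> x; rewrite /rho ge_min lexx.
have rholt : forall x, rho x < 1 -> eps < mu x.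
  move=> x; rewrite /rho gt_min ltxx /= gt_max => /andP [_].
  rewrite ltr_pdivrMr // mul1r => hh1; lra.
have ijm : forall i j : 'I_m, `|(i : nat)%:R - (j : nat)%:R| <= m%:R :> R.
  move=> i j.
  have hi : (i : nat)%:R <= m%:R :> R by rewrite ler_nat ltnW.
  have hj : (j : nat)%:R <= m%:R :> R by rewrite ler_nat ltnW.
  have hi0 : 0 <= (i : nat)%:R :> R by [].
  have hj0 : 0 <= (j : nat)%:R :> R by [].
  rewrite ler_norml; apply/andP; split; lra.
have Gconf : forall x, `|x| <= 1 -> forall i j, e i j -> row i (G x) != row j (G x).
  move=> x x1 i j eij.
  have ij : i != j by apply: contraTneq eij => ->; rewrite eirr.
  have E : row i (G x) - row j (G x) = (row i (g x) - row j (g x)) +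
      (rho x * ((i : nat)%:R - (j : nat)%:R)) *: w.
    by apply/rowP => l; rewrite !mxE; ring.
  rewrite -subr_eq0 E.
  case: (ltP (rho x) 1) => rx.
  - have hmu := rholt x rx.
    have h1 : mu x <= `|row i (g x) - row j (g x)|.
      by apply: (@bigmin_le_cond _ _ _ _ (i, j) (fun ij => e ij.1 ij.2)).
    have h2 : `|(rho x * ((i : nat)%:R - (j : nat)%:R)) *: w| < eps.
      rewrite normrZ normrM (ger0_norm (rho0 x)).
      have h3 := ijm i j.
      have h4 : `|w| * (m%:R + 1) < eps by rewrite -ltr_pdivlMr.
      have h5 : 0 <= `|w| := normr_ge0 w.
      have h6 : rho x * `|(i : nat)%:R - (j : nat)%:R| <= m%:R.
        by apply: le_trans (ler_pM (rho0 x) (normr_ge0 _) (rho1 x) h3) _; rewrite mul1r.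
      have h7 : 0 <= rho x * `|(i : nat)%:R - (j : nat)%:R| by rewrite mulr_ge0.
      apply: le_lt_trans (ler_pM h7 h5 h6 (lexx _)) _.
      nra.
    apply/negP; rewrite addr_eq0 => /eqP hE.
    by move: h2; rewrite -normrN -hE; lra.
  - have r1 : rho x = 1 by apply/eqP; rewrite eq_le rx rho1.
    rewrite r1 mul1r; apply/negP; rewrite addr_eq0 => /eqP hE.
    have cij : ((i : nat)%:R - (j : nat)%:R : R) != 0 by rewrite subr_eq0 eqr_nat.
    have := wav (i, j) x x1; rewrite /hh /= hE scalerN scaleNr opprK scalerA mulVf //.
    by rewrite scale1r eqxx.
have epsn : eps != 0 by rewrite gt_eqF.
have muL : forall x y, `|mu x - mu y| <= 2 * L * `|x - y|.
  move=> x y; rewrite /mu; apply: bigmin_lip; first by rewrite !mulr_ge0.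
  move=> ij _; apply: le_trans (rowD_bound _ _ _ _) _.
  by rewrite -mulrA ler_pM2l // gL.
have rhoL : forall x y, `|rho x - rho y| <= (2 * L / eps) * `|x - y|.
  move=> x y; apply: le_trans (clamp_lip _ _) _.
  have -> : (2 * eps - mu x) / eps - (2 * eps - mu y) / eps = (mu y - mu x) / eps.
    by field.
  rewrite normrM [`|eps^-1|]gtr0_norm ?invr_gt0 // distrC mulrAC ler_pM2r ?invr_gt0 //.
pose LG := L + 2 * L / eps * `|cmat|.
have LG0 : 0 <= LG by rewrite addr_ge0 // !mulr_ge0 // invr_ge0 ltW.
have GL : forall x y, `|G x - G y| <= LG * `|x - y|.
  move=> x y; rewrite /G.
  have -> : g x + rho x *: cmat - (g y + rho y *: cmat) = (g x - g y) + (rho x - rho y) *: cmat.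
    by rewrite opprD addrACA scalerBl.
  apply: le_trans (ler_normD _ _) _.
  rewrite normrZ /LG mulrDl lerD // [X in _ <= X]mulrAC ler_wpM2r //.
have rowDD : forall (A B : 'M[R]_(m,N)) i j,
    `|(row i A - row j A) - (row i B - row j B)| <= 2 * `|A - B|.
  move=> A B i j.
  have -> : row i A - row j A - (row i B - row j B) = row i (A - B) - row j (A - B).
    by apply/rowP => l; rewrite !mxE; ring.
  apply: le_trans (ler_normB _ _) _.
  by rewrite mulr2n mulrDl mul1r lerD // row_norm_le.
pose y (z : R * 'rV[R]_k.+1) := p + (2 - 2 * z.1) *: (z.2 - p).
pose H z := if z.1 <= 1 / 2 then (1 - 2 * z.1) *: f z.2 + (2 * z.1) *: g z.2
            else G (y z).
have h12 : (0 : R) <= 1 / 2 by rewrite divr_ge0.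
have n12 : ~~ ((1 : R) <= 1 / 2) by rewrite -ltNge; lra.
have GP : G p = f p by rewrite GS // gp.
exists H; split.
- have fstc : continuous (fun z : R * 'rV[R]_k.+1 => z.1) by move=> z; exact: cvg_fst.
  have sndc : continuous (fun z : R * 'rV[R]_k.+1 => z.2) by move=> z; exact: cvg_snd.
  pose A : set (R * 'rV[R]_k.+1) := (fun z => z.1) @^-1` [set t | 0 <= t] `&`
     ((fun z => z.1) @^-1` [set t | t <= 1 / 2] `&` (fun z => z.2) @^-1` S).
  pose B : set (R * 'rV[R]_k.+1) := (fun z => z.1) @^-1` [set t | 1 / 2 <= t] `&`
     ((fun z => z.1) @^-1` [set t | t <= 1] `&` (fun z => z.2) @^-1` S).
  have cS : closed S := @sphere_closed R k.
  have fcl : forall C, closed C -> closed ((fun z : R * 'rV[R]_k.+1 => z.1) @^-1` C).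
    by apply/continuous_closedP.
  have scl : forall C, closed C -> closed ((fun z : R * 'rV[R]_k.+1 => z.2) @^-1` C).
    by apply/continuous_closedP.
  have cge : forall y0 : R, closed ((fun z : R * 'rV[R]_k.+1 => z.1) @^-1` [set t | y0 <= t]).
    by move=> y0; apply: fcl; exact: (@closed_ge R y0).
  have cle : forall y0 : R, closed ((fun z : R * 'rV[R]_k.+1 => z.1) @^-1` [set t | t <= y0]).
    by move=> y0; apply: fcl; exact: (@closed_le R y0).
  have cA : closed A.
    apply: closedI; first exact: cge.
    apply: closedI; first exact: cle.
    exact: scl _ cS.
  have cB : closed B.
    apply: closedI; first exact: cge.
    apply: closedI; first exact: cle.
    exact: scl _ cS.
  have ISAB : unit_interval R `*` S = A `|` B.
    apply/seteqP; split => -[t s] /=.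
    + rewrite /unit_interval /= => -[/andP [t0 t1] Ss].
      case: (lerP t (1 / 2)) => th; [left | right]; do ?split => //; exact: ltW.
    + case => [[/= t0 [th Ss]] | [/= th [t1 Ss]]]; split => //;
        rewrite /unit_interval /=; apply/andP; split => //; lra.
  rewrite ISAB; apply: withinU_continuous => //.
  + apply: (@subspace_eq_continuous _ A _
       (fun z => (1 - 2 * z.1) *: f z.2 + (2 * z.1) *: g z.2)).
      by move=> [t s]; rewrite inE => -[/= t0 [th Ss]]; rewrite /from_subspace /H /= th.
    apply: within_eps => -[t s] [/= t0 [th Ss]] eps' eps'0.
    have e3 : 0 < eps' / 3 by rewrite divr_gt0.
    have [d1 d10 Hd1] := within_eps_inv fc Ss e3.
    have Lp : 0 < L + 2 * eps + 1 by lra.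
    pose q := eps' / (3 * (L + 2 * eps + 1)).
    have q0 : 0 < q by rewrite divr_gt0 // mulr_gt0.
    have qE : (L + 2 * eps + 1) * q = eps' / 3 by rewrite /q; field; rewrite gt_eqF.
    exists (Order.min d1 q); first by rewrite lt_min d10 q0.
    move=> [t' s'] [/= t'0 [th' Ss']] [/= bt bs].
    rewrite -ball_normE /ball_ /= lt_min in bt.
    rewrite -ball_normE /ball_ /= lt_min in bs.
    move/andP: bt => [bt1 bt2]; move/andP: bs => [bs1 bs2].
    have Hf := Hd1 s' Ss' bs1.
    have E : (1 - 2 * t) *: f s + (2 * t) *: g s - ((1 - 2 * t') *: f s' + (2 * t') *: g s')
       = (1 - 2 * t) *: (f s - f s') + (2 * t) *: (g s - g s') + (2 * (t' - t)) *: (f s' - g s').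
      by apply/matrixP => a b; rewrite !mxE; ring.
    rewrite E.
    have n1 : `|(1 - 2 * t) *: (f s - f s')| <= `|f s - f s'|.
      rewrite normrZ; apply: le_trans (ler_wpM2r (normr_ge0 _) (_ : `|1 - 2 * t| <= 1)) _.
        by rewrite ler_norml; apply/andP; split; lra.
      by rewrite mul1r.
    have n2 : `|(2 * t) *: (g s - g s')| <= L * `|s - s'|.
      rewrite normrZ; apply: le_trans (ler_wpM2r (normr_ge0 _) (_ : `|2 * t| <= 1)) _.
        by rewrite ler_norml; apply/andP; split; lra.
      by rewrite mul1r gL.
    have n3 : `|(2 * (t' - t)) *: (f s' - g s')| <= 2 * (`|t - t'| * eps).
      rewrite normrZ normrM normr_nat [`|t' - t|]distrC -mulrA ler_wpM2l //.
      by rewrite ler_wpM2l // distrC gf.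
    have a1 : L * `|s - s'| <= L * q := ler_wpM2l L0 (ltW bs2).
    have a2 : `|t - t'| * eps <= q * eps := ler_wpM2r (ltW eps0) (ltW bt2).
    apply: le_lt_trans (ler_normD _ _) _.
    apply: le_lt_trans (lerD (ler_normD _ _) (lexx _)) _.
    lra.
  + apply: (@subspace_eq_continuous _ B _ (fun z => G (y z))).
      move=> [t s]; rewrite inE => -[/= th [t1 Ss]]; rewrite /from_subspace /H /=.
      case: ifP => // th'.
      have -> : t = 1 / 2 by apply/eqP; rewrite eq_le th th'.
      have h2 : 2 * (1 / 2 : R) = 1 by field.
      have h3 : (2 - 1 : R) = 1 by lra.
      rewrite /y /= h2 h3 subrr scale0r add0r !scale1r addrC subrK GS //.
    apply: within_eps => -[t s] [/= th [t1 Ss]] eps' eps'0.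
    have LGp : 0 < 5 * LG + 1 by lra.
    pose q := eps' / (5 * LG + 1).
    have q0 : 0 < q by rewrite divr_gt0.
    have qE : (5 * LG + 1) * q = eps' by rewrite /q; field; rewrite gt_eqF.
    exists q => //.
    move=> [t' s'] [/= th' [t1' Ss']] [/= bt bs].
    rewrite -ball_normE /ball_ /= in bt.
    rewrite -ball_normE /ball_ /= in bs.
    apply: le_lt_trans (GL _ _) _.
    have E : y (t, s) - y (t', s') = (2 - 2 * t) *: (s - s') + (2 * (t' - t)) *: (s' - p).
      by rewrite /y /=; apply/matrixP => a b; rewrite !mxE; ring.
    rewrite E.
    have n1 : `|(2 - 2 * t) *: (s - s')| <= `|s - s'|.
      rewrite normrZ; apply: le_trans (ler_wpM2r (normr_ge0 _) (_ : `|2 - 2 * t| <= 1)) _.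
        by rewrite ler_norml; apply/andP; split; lra.
      by rewrite mul1r.
    have n2 : `|(2 * (t' - t)) *: (s' - p)| <= 2 * `|t - t'| * 2.
      rewrite normrZ normrM normr_nat [`|t' - t|]distrC; apply: ler_wpM2l; first by rewrite mulr_ge0.
      apply: le_trans (ler_normB _ _) _.
      by rewrite (_ : (2 : R) = 1 + 1) // lerD // sphere_norm.
    have b1 : `|(2 - 2 * t) *: (s - s') + (2 * (t' - t)) *: (s' - p)| <= 5 * q.
      apply: le_trans (ler_normD _ _) _; lra.
    have b2 := ler_wpM2l LG0 b1.
    lra.
- move=> _ [[t s] [It Ss] <-] i j eij; rewrite /H /=.
  move: It; rewrite /unit_interval /= => /andP [t0 t1].
  case: ifP => ht.
  + apply/eqP; rewrite -subr_eq0.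
    have -> : row i ((1 - 2 * t) *: f s + (2 * t) *: g s) -
              row j ((1 - 2 * t) *: f s + (2 * t) *: g s) =
              (row i (f s) - row j (f s)) +
              (2 * t) *: ((row i (g s) - row j (g s)) - (row i (f s) - row j (f s))).
      by apply/rowP => l; rewrite !mxE; ring.
    rewrite addr_eq0; apply/negP => /eqP hE.
    have h1 := fsep s i j Ss eij.
    have h2 := rowDD (g s) (f s) i j.
    have h3 := gf s Ss.
    move: h1; rewrite hE normrN normrZ ger0_norm ?mulr_ge0 // => h1.
    have h4 : 2 * t <= 1 by lra.
    have h5 := ler_pM (mulr_ge0 (ler0n _ 2) t0) (normr_ge0 _) h4 h2.
    lra.
  + apply/eqP; apply: Gconf => //.
    have key : forall (a b lam : R), 0 <= lam -> lam <= 1 -> `|a| <= 1 -> `|b| <= 1 ->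
        `|a + lam * (b - a)| <= 1.
      move=> a b lam l0 l1; rewrite !ler_norml => /andP [a1 a2] /andP [b1 b2].
      apply/andP; split; nra.
    have ht' : 1 / 2 < t by rewrite ltNge ht.
    apply: mx_norm_le => // a l; rewrite (ord1 a) !mxE /=.
    apply: key; [lra | lra | | exact: sphere_entry l Ss].
    by case: (l == ord0); rewrite ?normr1 ?normr0 ?ler01.
- move=> s Ss; rewrite /H /= h12 mulr0 subr0 scale1r scale0r addr0 //.
- move=> s Ss; rewrite /H /= (negPf n12) /y /= mulr1 subrr scale0r addr0 //.
- move=> t It; rewrite /H /=; case: ifP => _.
  + by rewrite gp -scalerDl subrK scale1r.
  + by rewrite /y /= subrr scaler0 addr0.
Qed.

End Main.


End Aux.

Theorem corollary7p3 (R : realType) (m N : nat) (e : rel 'I_m) :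
  simple_graph e -> graph_connected e -> (2 < N)%N ->
  n_connected R (N - 2) (Conf R N e).
Proof.
move=> [esym eirr] _ N2; split.
- have N0 : (0 < N)%N by apply: leq_trans N2.
  exists (\matrix_(i, l) (if (l : nat) == 0%N then ((i : nat)%:R : R) else 0))%R.
  move=> i j eij hrow.
  have := congr1 (fun v : 'rV[R]_N => v ord0 (Ordinal N0)) hrow.
  rewrite !mxE /= => /eqP; rewrite Num.Theory.eqr_nat => /eqP ij.
  have ij' : i = j by apply: val_inj.
  by move: eij; rewrite ij' eirr.
- move=> kk kN x0 Cx0 f fc fS fp.
  have kN' : (kk.+1 < N)%N by lia.
  have [H [Hc Hi H0 H1 Hp]] := Aux.main_homotopy eirr kN' fc fS.
  exists H; split => //.
  + by move=> s Ss; rewrite H1 // fp.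
  + by move=> t It; rewrite Hp // fp.
Qed.
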